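(* Let $K$ be a global function field, $\ell$ a rational prime coprime to the characteristic of $K$, and suppose a primitive $\ell$-th root of unity lies in $K$. Let $x,d,a\in K^*$ with $dx^\ell+d^\ell\neq0$ and $a+a^{-1}\neq0$, and let $H=K\left(\sqrt[\ell]{1+d^{-1}},\sqrt[\ell]{1+(dx^\ell+d^\ell)^{-1}},\sqrt[\ell]{1+(a+a^{-1})d^{-1}}\right)$. Then for every prime $\mathfrak{q}$ of $H$ which is not a pole of $d$ (i.e. $v_\mathfrak{q}(d)\ge0$): (i) $v_\mathfrak{q}(d)\equiv0\pmod\ell$; (ii) $v_\mathfrak{q}(dx^\ell+d^\ell)\equiv0\pmod\ell$; (iii) $v_\mathfrak{q}(a)\equiv0\pmod\ell$.
   Context: For a prime $\mathfrak{q}$ of a global function field, $v_\mathfrak{q}$ denotes the normalized discrete valuation. *)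

(* Defs.v *)
From HB Require Import structures.
From mathcomp Require Import all_boot all_order all_algebra all_field.
Set Implicit Arguments. Unset Strict Implicit. Unset Printing Implicit Defensive.
Import Order.TTheory GRing.Theory Num.Theory.
Local Open Scope ring_scope.

(* A prime q of a field L, represented by its normalized discrete valuation
   v_q : L^* -> Z (the value at 0 is irrelevant and never used).
   Normalized = surjective onto Z, guaranteed by an element of value 1.
   For a global function field every nontrivial discrete valuation is trivial
   on the (finite) constant field, so these are exactly the places. *)
Definition normalized_dvaluation (L : fieldType) (v : L -> int) : Prop :=
  [/\ (forall x y : L, x != 0 -> y != 0 -> v (x * y) = v x + v y),
      (forall x y : L, x != 0 -> y != 0 -> x + y != 0 ->
          Num.min (v x) (v y) <= v (x + y))
    & (exists z : L, z != 0 /\ v z = 1)].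

(* Main.v *)
Require Import Defs.
From HB Require Import structures.
From mathcomp Require Import all_boot all_order all_algebra all_field.
From mathcomp Require Import zify.
Import Order.TTheory GRing.Theory Num.Theory.
Local Open Scope ring_scope.

Section Val.
Variables (L : fieldType) (v : L -> int).
Hypothesis hv : normalized_dvaluation v.

Lemma vM x y : x != 0 -> y != 0 -> v (x * y) = v x + v y.
Proof. by move: hv; rewrite /normalized_dvaluation => -[h _ _]; apply: h. Qed.

Lemma vD x y : x != 0 -> y != 0 -> x + y != 0 -> (v x <= v (x + y)) || (v y <= v (x + y)).
Proof. move: hv; rewrite /normalized_dvaluation => -[_ h _] hx hy hxy; by rewrite -ge_min h. Qed.

Lemma v1 : v 1 = 0.
Proof. have := @vM 1 1 (oner_neq0 L) (oner_neq0 L); rewrite mulr1; lia. Qed.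

Lemma vN1 : v (-1) = 0.
Proof.
have h : (-1 : L) != 0 by rewrite oppr_eq0 oner_neq0.
have := @vM _ _ h h; rewrite mulrNN mulr1 v1; lia.
Qed.

Lemma vN x : x != 0 -> v (- x) = v x.
Proof.
move=> hx; rewrite -mulN1r vM ?vN1 ?add0r //.
by rewrite oppr_eq0 oner_neq0.
Qed.

Lemma vV x : x != 0 -> v (x^-1) = - v x.
Proof.
move=> hx; have := @vM _ _ hx (invr_neq0 hx); rewrite divff // v1; lia.
Qed.

Lemma vX x n : x != 0 -> v (x ^+ n) = (n%:Z * v x)%R.
Proof.
move=> hx; elim: n => [|n IH]; first by rewrite expr0 v1 mul0r.
rewrite exprS vM ?expf_neq0 // IH; lia.
Qed.

Lemma vstrict a b : a != 0 -> b != 0 -> v a < v b -> v (a + b) = v a /\ a + b != 0.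
Proof.
move=> ha hb lt.
have hab : a + b != 0.
  apply/eqP => e; move: lt; rewrite (_ : b = - a) ?vN ?ltxx //.
  by apply/eqP; rewrite -subr_eq0 opprK addrC e.
split => //.
have h1 := @vD _ _ ha hb hab.
have hnb : - b != 0 by rewrite oppr_eq0.
have h2 := @vD _ _ hab hnb; rewrite addrK vN // in h2.
move: (h2 ha) => {}h2; case/orP: h1 => h1; case/orP: h2 => h2; lia.
Qed.

Lemma lemA (l : nat) z y : z != 0 -> v z < 0 -> 1 + z = y ^+ l -> (l%:Z %| v z)%Z.
Proof.
move=> hz lt e.
have lt' : v z < v 1 by rewrite v1.
have [h1 h2] := @vstrict _ _ hz (oner_neq0 L) lt'.
rewrite addrC e in h1 h2.
case: l e h1 h2 => [|l] e h1 h2.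
  by move: e; rewrite expr0 => /eqP; rewrite -subr_eq0 addrC addKr (negbTE hz).
have hy : y != 0 by apply: contraNneq h2 => ->; rewrite expr0n.
by rewrite -h1 vX // dvdz_mulr.
Qed.

Lemma lemB (l : nat) z y : z != 0 -> 0 <= v z -> 1 + z^-1 = y ^+ l -> (l%:Z %| v z)%Z.
Proof.
move=> hz ge e.
case: (v z =P 0) => [->|ne]; first exact: dvdz0.
have := @lemA l _ _ (invr_neq0 hz) _ e; rewrite vV //.
rewrite dvdzE abszN; apply; lia.
Qed.

Lemma lemC (l : nat) A D y : A != 0 -> D != 0 -> v A < 0 -> 0 <= v D ->
  (l%:Z %| v D)%Z -> 1 + (A + A^-1) * D^-1 = y ^+ l -> (l%:Z %| v A)%Z.
Proof.
move=> hA hD lt ge dD e.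
have hAi := invr_neq0 hA.
have lt' : v A < v A^-1 by rewrite vV //; lia.
have [h1 h2] := @vstrict _ _ hA hAi lt'.
have hDi := invr_neq0 hD.
have hz : (A + A^-1) * D^-1 != 0 by rewrite mulf_neq0.
have := @lemA l _ _ hz _ e.
rewrite vM // h1 vV // => /(_ ltac:(lia)) h.
have -> : v A = (v A + - v D) + v D by lia.
exact: rpredD.
Qed.

End Val.
Arguments vM {L v}. Arguments vD {L v}. Arguments vX {L v}. Arguments vV {L v}. Arguments vstrict {L v}. Arguments lemA {L v}. Arguments lemB {L v}. Arguments lemC {L v}.


Lemma ineq1 (p q t : int) : p < 0 -> q <= p -> t <= q -> 0 <= t -> False.
Proof. move=> *; lia. Qed.
Lemma ineq2 (p t : int) : p < 0 -> t <= p -> 0 <= t -> False.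
Proof. move=> *; lia. Qed.

Theorem lemma3p7
  (F : finFieldType) (K : fieldExtType {fraction {poly F}})
  (l : nat) (l_prime : prime l) (l_coprime_char : (l%:R : K) != 0)
  (zeta_in_K : exists zeta : K, l.-primitive_root zeta)
  (x d a : K) (x_nz : x != 0) (d_nz : d != 0) (a_nz : a != 0)
  (hdx : d * x ^+ l + d ^+ l != 0) (ha : a + a^-1 != 0)
  (H : fieldExtType K) (y1 y2 y3 : H)
  (hy1 : y1 ^+ l = (1 + d^-1)%:A)
  (hy2 : y2 ^+ l = (1 + (d * x ^+ l + d ^+ l)^-1)%:A)
  (hy3 : y3 ^+ l = (1 + (a + a^-1) * d^-1)%:A)
  (hgen : (<<1%VS & [:: y1; y2; y3]>>)%VS = fullv)
  (v : H -> int) (hv : normalized_dvaluation v)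
  (hq : 0 <= v d%:A) :
  [/\ (l%:Z %| v d%:A)%Z,
      (l%:Z %| v (d * x ^+ l + d ^+ l)%:A)%Z
    & (l%:Z %| v a%:A)%Z].
Proof.
have alg a' : (a' != 0) -> a'%:A != 0 :> H by move=> ?; rewrite -in_algE fmorph_eq0.
have eE : (d * x ^+ l + d ^+ l)%:A = d%:A * x%:A ^+ l + d%:A ^+ l :> H.
  by rewrite -!in_algE rmorphD rmorphM !rmorphXn.
have hy1' : y1 ^+ l = 1 + (d%:A)^-1 by rewrite hy1 -!in_algE rmorphD rmorph1 fmorphV.
have hy2' : y2 ^+ l = 1 + (d%:A * x%:A ^+ l + d%:A ^+ l)^-1.
  by rewrite hy2 -eE -!in_algE rmorphD rmorph1 fmorphV.
have hy3' : y3 ^+ l = 1 + (a%:A + (a%:A)^-1) * (d%:A)^-1.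
  by rewrite hy3 -!in_algE rmorphD rmorph1 rmorphM rmorphD !fmorphV.
have hD : d%:A != 0 :> H by apply: alg.
have hX : x%:A != 0 :> H by apply: alg.
have hA : a%:A != 0 :> H by apply: alg.
rewrite eE. clear hy1 hy2 hy3.
set D := d%:A in hy1' hy2' hy3' hD hq *; set X := x%:A in hy2' hX *; set A := a%:A in hy3' hA *.
have hE : D * X ^+ l + D ^+ l != 0 by rewrite /D /X -eE alg.
have e1 := esym hy1'. have e2 := esym hy2'. have e3 := esym hy3'.
have dD : (l%:Z %| v D)%Z by apply: (lemB hv l _ _ hD hq e1).
split => //.
- case: (lerP 0 (v (D * X ^+ l + D ^+ l))) => hge.
    exact: (lemB hv l _ _ hE hge e2).
  have hDX : D * X ^+ l != 0 by rewrite mulf_neq0 // expf_neq0.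
  have hDl : D ^+ l != 0 by rewrite expf_neq0.
  have vDl : v (D ^+ l) = l%:Z * v D by rewrite (vX hv D l hD).
  have vDX : v (D * X ^+ l) = v D + l%:Z * v X by rewrite (vM hv) ?expf_neq0 // (vX hv X l hX).
  case: (ltrP (v (D * X ^+ l)) (v (D ^+ l))) => c.
    have [-> _] := vstrict hv _ _ hDX hDl c.
    by rewrite vDX; apply: rpredD => //; apply: dvdz_mulr.
  have := vD hv _ _ hDX hDl hE.
  have : 0 <= l%:Z * v D by rewrite mulr_ge0.
  move=> h0 /orP [h|h]; exfalso.
    apply: (ineq1 _ _ _ hge h) h0; by rewrite -vDl.
  apply: (ineq2 _ _ hge) h0; by rewrite -vDl.
- case: (ltrgtP (v A) 0) => c.
  + exact: (lemC hv l _ _ _ hA hD c hq dD e3).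
  + have hAi := invr_neq0 hA.
    have e3' : 1 + (A^-1 + A^-1^-1) * D^-1 = y3 ^+ l by rewrite invrK [A^-1 + A]addrC.
    have := lemC hv l _ _ _ hAi hD _ hq dD e3'.
    rewrite (vV hv) // dvdzE abszN; apply; move: c; clear; lia.
  + by rewrite c.
Qed.
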